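(* For an $M$-memory $(T(n),IO(n))$-time $S(n)$-space RATM-TLM $\mathcal M$, a RATM-BIO $\mathcal M'$ can simulate $\mathcal M$ with $O(IO(n)\cdot S(n))$ external access trace complexity.
   Context: A RATM-TLM with main memory size $M$ has a main memory tape of $M$ cells with random access (a main-memory address tape and a random access state $q_a$; entering $q_a$ moves the main head in one step to the cell whose index is on that address tape), an unbounded external memory tape and an external address tape; it has read and write states: on entering a read state an address $addr$ is written on the external address tape and the main memory cell under the head receives the content of external cell $addr$; a write state does the reverse. Each Read/Write is one unit-cost IO operation. Time = number of transitions other than Read/Write; IO time = number of Read/Write; space = number of external cells used; an $M$-memory $(T(n),IO(n))$-time $S(n)$-space machine has main memory size $M$ and time, IO, space complexities $O(T(n))$, $O(IO(n))$, $O(S(n))$. A RATM-BIO (random access Turing machine with blocking IO) has four tapes: a main memory tape with its address tape, and an external memory tape with its address tape; a main head with random access on the main tape and an external head that moves only one cell at a time on the external tape. Its transitions are main memory computation transitions (main head moves, external head halts), external memory access transitions (external head moves one step, main head halts), and read/write transitions: on entering a read (write) state an external address is written, the main head halts and the external head moves step by step to the designated external cell; when reached, the content of that cell replaces (is replaced by) the content of the main memory cell under the main head, and main memory computation resumes. The external access trace complexity is the total number of moves of the external head. *)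

(* Defs.v *)
From mathcomp Require Import all_boot.
Unset Printing Implicit Defensive.

Inductive dir := DL | DS | DR.

(* move on a one-way infinite tape (cells 0,1,2,...); moving left at 0 stays *)
Definition mv (d : dir) (h : nat) : nat :=
  match d with DL => h.-1 | DS => h | DR => h.+1 end.

Definition mv_bounded (M : nat) (d : dir) (h : nat) : nat :=
  if mv d h < M then mv d h else h.

(* Tapes are represented by finite sequences implicitly padded with blanks:
   reading cell i is [nth blank s i], writing is [set_nth blank s i a]. *)

(* An address written on an address tape: binary numeral, least significant
   digit in cell 0, terminated by the first non-digit symbol (e.g. blank). *)
Definition decode {Sym : Type} (digit : Sym -> option bool) (s : seq Sym) : nat :=
  foldr (fun a acc => if digit a is Some b then b + acc.*2 else 0) 0 s.

Inductive tkind := TNormal | TRandAcc | TRead | TWrite | TAccept | TReject.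

Record TLM := {
  t_state : finType;
  t_sym : finType;
  t_blank : t_sym;
  t_inp : bool -> t_sym;
  t_inp_inj : injective t_inp;
  t_inp_blank : forall b, t_inp b != t_blank;
  t_digit : t_sym -> option bool;
  t_digit_blank : t_digit t_blank = None;
  t_msize : nat;
  t_start : t_state;
  t_kind : t_state -> tkind;
  (* ordinary transition: (state, main cell, main-address cell, ext-address cell)
     -> (new state, writes on these three tapes, moves of their three heads) *)
  t_delta : t_state -> t_sym -> t_sym -> t_sym ->
            t_state * t_sym * t_sym * t_sym * dir * dir * dir;
  (* successor state after a random access / read / write operation *)
  t_next : t_state -> t_state
}.

Record tconf (M : TLM) := TConf {
  tc_st : t_state M;
  tc_mem : seq (t_sym M);  tc_mh : nat;
  tc_mat : seq (t_sym M);  tc_mah : nat;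
  tc_ext : seq (t_sym M);
  tc_eat : seq (t_sym M);  tc_eah : nat
}.
Arguments TConf {M}.
Arguments tc_st {M}.

(* one step; label [None] = ordinary transition (time), [Some a] = one IO on
   external cell a; [None] result = halted *)
Definition tstep {M : TLM} (c : tconf M) : option (tconf M * option nat) :=
  let: TConf q mem mh mat mah ext eat eah := c in
  let b := t_blank M in
  match t_kind M q with
  | TAccept | TReject => None
  | TNormal =>
      let: (q', a1, a2, a3, d1, d2, d3) :=
         t_delta M q (nth b mem mh) (nth b mat mah) (nth b eat eah) in
      Some (TConf q' (set_nth b mem mh a1) (mv_bounded (t_msize M) d1 mh)
                     (set_nth b mat mah a2) (mv d2 mah) ext
                     (set_nth b eat eah a3) (mv d3 eah), None)
  | TRandAcc =>
      let a := decode (t_digit M) mat in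
      Some (TConf (t_next M q) mem (if a < t_msize M then a else mh)
                  mat mah ext eat eah, None)
  | TRead =>
      let a := decode (t_digit M) eat in
      Some (TConf (t_next M q) (set_nth b mem mh (nth b ext a)) mh
                  mat mah ext eat eah, Some a)
  | TWrite =>
      let a := decode (t_digit M) eat in
      Some (TConf (t_next M q) mem mh mat mah (set_nth b ext a (nth b mem mh))
                  eat eah, Some a)
  end.

Fixpoint trun {M : TLM} (k : nat) (c : tconf M) : tconf M * seq (option nat) :=
  if k is k'.+1 then
    if tstep c is Some (c', l) then let: (cf, ls) := trun k' c' in (cf, l :: ls)
    else (c, [::])
  else (c, [::]).

Definition tinit (M : TLM) (w : seq bool) : tconf M :=
  TConf (t_start M) (nseq (t_msize M) (t_blank M)) 0 [::] 0
        (map (t_inp M) w) [::] 0.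

Definition t_result (M : TLM) (w : seq bool) (ls : seq (option nat)) (acc : bool) :=
  exists k, let: (c, ls') := trun k (tinit M w) in
    ls' = ls /\ t_kind M (tc_st c) = (if acc then TAccept else TReject).

Definition t_time (ls : seq (option nat)) : nat := count (fun l => l == None) ls.
Definition t_io (ls : seq (option nat)) : nat := count (fun l => l != None) ls.
Definition t_space (ls : seq (option nat)) : nat := foldr maxn 0 (map S (pmap id ls)).

Definition TLM_bounded (M : TLM) (Mm : nat) (T IO S : nat -> nat) : Prop :=
  t_msize M = Mm /\
  (forall w, exists ls acc, t_result M w ls acc) /\
  exists c N, forall w ls acc, N <= size w -> t_result M w ls acc ->
    [/\ t_time ls <= c * T (size w), t_io ls <= c * IO (size w)
      & t_space ls <= c * S (size w)].

Inductive bkind := BMain | BExt | BRandAcc | BRead | BWrite | BAccept | BReject.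

Record BIO := {
  b_state : finType;
  b_sym : finType;
  b_blank : b_sym;
  b_inp : bool -> b_sym;
  b_inp_inj : injective b_inp;
  b_inp_blank : forall b, b_inp b != b_blank;
  b_digit : b_sym -> option bool;
  b_digit_blank : b_digit b_blank = None;
  b_msize : nat;
  b_start : b_state;
  b_kind : b_state -> bkind;
  b_delta : b_state -> b_sym -> b_sym -> b_sym ->
            b_state * b_sym * b_sym * b_sym * dir * dir * dir;
  (* external memory access transition: (state, external cell under external
     head, main cell under main head) -> (state, write on external cell,
     external head move by at most one cell); main head halts *)
  b_ext : b_state -> b_sym -> b_sym -> b_state * b_sym * dir;
  b_next : b_state -> b_state
}.

Record bconf (M : BIO) := BConf {
  bc_st : b_state M;
  bc_mem : seq (b_sym M);  bc_mh : nat;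
  bc_mat : seq (b_sym M);  bc_mah : nat;
  bc_ext : seq (b_sym M);  bc_eh : nat;
  bc_eat : seq (b_sym M);  bc_eah : nat
}.
Arguments BConf {M}.
Arguments bc_st {M}.

(* label = number of moves of the external head during the step;
   a read/write walks the external head cell by cell to the address *)
Definition bstep {M : BIO} (c : bconf M) : option (bconf M * nat) :=
  let: BConf q mem mh mat mah ext eh eat eah := c in
  let b := b_blank M in
  match b_kind M q with
  | BAccept | BReject => None
  | BMain =>
      let: (q', a1, a2, a3, d1, d2, d3) :=
         b_delta M q (nth b mem mh) (nth b mat mah) (nth b eat eah) in
      Some (BConf q' (set_nth b mem mh a1) (mv_bounded (b_msize M) d1 mh)
                     (set_nth b mat mah a2) (mv d2 mah) ext eh
                     (set_nth b eat eah a3) (mv d3 eah), 0)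
  | BExt =>
      let: (q', a, d) := b_ext M q (nth b ext eh) (nth b mem mh) in
      let eh' := mv d eh in
      Some (BConf q' mem mh mat mah (set_nth b ext eh a) eh' eat eah,
            (eh' - eh) + (eh - eh'))
  | BRandAcc =>
      let a := decode (b_digit M) mat in
      Some (BConf (b_next M q) mem (if a < b_msize M then a else mh)
                  mat mah ext eh eat eah, 0)
  | BRead =>
      let a := decode (b_digit M) eat in
      Some (BConf (b_next M q) (set_nth b mem mh (nth b ext a)) mh
                  mat mah ext a eat eah, (a - eh) + (eh - a))
  | BWrite =>
      let a := decode (b_digit M) eat in
      Some (BConf (b_next M q) mem mh mat mah (set_nth b ext a (nth b mem mh)) a
                  eat eah, (a - eh) + (eh - a))
  end.

Fixpoint brun {M : BIO} (k : nat) (c : bconf M) : bconf M * seq nat :=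
  if k is k'.+1 then
    if bstep c is Some (c', l) then let: (cf, ls) := brun k' c' in (cf, l :: ls)
    else (c, [::])
  else (c, [::]).

Definition binit (M : BIO) (w : seq bool) : bconf M :=
  BConf (b_start M) (nseq (b_msize M) (b_blank M)) 0 [::] 0
        (map (b_inp M) w) 0 [::] 0.

Definition b_result (M : BIO) (w : seq bool) (ls : seq nat) (acc : bool) :=
  exists k, let: (c, ls') := brun k (binit M w) in
    ls' = ls /\ b_kind M (bc_st c) = (if acc then BAccept else BReject).

Definition b_trace (ls : seq nat) : nat := sumn ls.

Definition simulates (M' : BIO) (M : TLM) : Prop :=
  forall w ls acc, t_result M w ls acc -> exists ls', b_result M' w ls' acc.

Definition trace_bigO (M' : BIO) (f : nat -> nat) : Prop :=
  exists c N, forall w ls acc, N <= size w -> b_result M' w ls acc ->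
    b_trace ls <= c * f (size w).

(* Main.v *)
Require Import Defs.
From mathcomp Require Import all_boot.
From mathcomp Require Import zify.

Section Sim.
Variable M : TLM.

Definition kmap (k : tkind) : bkind :=
  match k with TNormal => BMain | TRandAcc => BRandAcc | TRead => BRead
  | TWrite => BWrite | TAccept => BAccept | TReject => BReject end.

Definition Mb : BIO := {|
  b_state := t_state M; b_sym := t_sym M; b_blank := t_blank M;
  b_inp := t_inp M; b_inp_inj := t_inp_inj M; b_inp_blank := t_inp_blank M;
  b_digit := t_digit M; b_digit_blank := t_digit_blank M;
  b_msize := t_msize M; b_start := t_start M;
  b_kind := fun q => kmap (t_kind M q);
  b_delta := t_delta M;
  b_ext := fun q a _ => (q, a, DS);
  b_next := t_next M |}.

Definition embed (c : tconf M) (eh : nat) : bconf Mb :=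
  let: TConf q mem mh mat mah ext eat eah := c in
  @BConf Mb q mem mh mat mah ext eh eat eah.

Fixpoint lab (eh : nat) (ls : seq (option nat)) : seq nat :=
  match ls with
  | [::] => [::]
  | None :: t => 0 :: lab eh t
  | Some a :: t => ((a - eh) + (eh - a)) :: lab a t
  end.

Lemma step_sim c eh :
  bstep (embed c eh) =
  match tstep c with
  | None => None
  | Some (c', None) => Some (embed c' eh, 0)
  | Some (c', Some a) => Some (embed c' a, (a - eh) + (eh - a))
  end.
Proof.
case: c => q mem mh mat mah ext eat eah /=.
case: (t_kind M q) => //=.
by case: (t_delta _ _ _ _ _) => [[[[[[q' a1] a2] a3] d1] d2] d3].
Qed.

Lemma run_sim k c eh :
  let: (cf, ls) := trun k c in
  exists eh', brun k (embed c eh) = (embed cf eh', lab eh ls).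
Proof.
elim: k c eh => [|k IH] c eh /=; first by exists eh.
rewrite step_sim.
case: (tstep c) => [[c' [a|]]|]; last by exists eh.
- have := IH c' a; case: (trun k c') => cf ls [eh' ->]; by exists eh'.
- have := IH c' eh; case: (trun k c') => cf ls [eh' ->]; by exists eh'.
Qed.

Lemma lab_bound ls eh :
  sumn (lab eh ls) <= t_io ls * maxn eh (t_space ls).
Proof.
elim: ls eh => [|[a|] t IH] eh //=.
- have H := IH a.
  rewrite /t_io /= -/(t_io t).
  rewrite /t_space /= -/(t_space t).
  have H2 : t_io t * maxn a (t_space t) <= t_io t * maxn eh (maxn a.+1 (t_space t)).
    apply: leq_mul => //; lia.
  rewrite mulSn; apply: leq_add; last exact: leq_trans H H2.
  lia.
- rewrite add0n /t_io /= -/(t_io t). exact: IH.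
Qed.

Lemma tinit_embed w : binit Mb w = embed (tinit M w) 0.
Proof. by []. Qed.

Lemma kmap_acc k (acc : bool) :
  kmap k = (if acc then BAccept else BReject) -> k = (if acc then TAccept else TReject).
Proof. by case: k; case: acc. Qed.

Lemma embed_st c eh : bc_st (embed c eh) = tc_st c.
Proof. by case: c. Qed.

End Sim.

Theorem theorem6 (M : TLM) (Mm : nat) (T IO S : nat -> nat) :
  TLM_bounded M Mm T IO S ->
  exists M' : BIO, simulates M' M /\ trace_bigO M' (fun n => IO n * S n).
Proof.
move=> [_ [_ [c [N Hb]]]].
exists (Mb M); split.
- move=> w ls acc [k Hk]; exists (lab 0 ls); exists k.
  have := run_sim M k (tinit M w) 0.
  case: (trun k (tinit M w)) Hk => cf ls0 [-> Hkind] [eh' Hr].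
  rewrite tinit_embed Hr; split => //.
  by rewrite /= embed_st; case: acc Hkind => /= ->.
- exists (c * c), N => w ls' acc Hw [k Hk].
  have := run_sim M k (tinit M w) 0.
  move: Hk; rewrite tinit_embed.
  case E: (trun k (tinit M w)) => [cf ls] .
  move=> Hk [eh' Hr]; rewrite Hr in Hk; case: Hk => <- Hkind.
  rewrite embed_st /= in Hkind.
  have Ht : t_result M w ls acc.
    exists k; rewrite E; split => //; exact: kmap_acc.
  have [_ Hio Hsp] := Hb w ls acc Hw Ht.
  apply: leq_trans (lab_bound ls 0) _.
  rewrite max0n.
  have -> : c * c * (IO (size w) * S (size w)) = (c * IO (size w)) * (c * S (size w)) by rewrite mulnACA.
  exact: leq_mul.
Qed.
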